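(* In the odd setting below, for all $i,j\in\{1,\dots,n\}$ and $\ell\in\{0,\dots,s-1\}$, the determinant $D^j_{2\ell,i}$ is homogeneous of degree $\ell/s$.
   Context: Odd setting: integers $n\ge1$, $s\ge1$, $m=2s+1$; $a_k^0,\dots,a_k^{2s}$ are $n\times n$ matrices with indeterminate entries, $N$-periodic in $k$. $Q_k$ is the $mn\times mn$ block matrix with $I_n$ in blocks $(i+1,i)$, last block column $(a_k^0;\dots;a_k^{2s})$, $O_n$ elsewhere. $r_k=(a_k^0;O_n;a_k^2;O_n;\dots;O_n;a_k^{2s})$. $F^{(k)}_0=r_k$, $F^{(k)}_\ell=Q_k\cdots Q_{k+\ell-1}r_{k+\ell}$ ($mn\times n$), $N_k=(F^{(k)}_0,\dots,F^{(k)}_{2s})$. For $0\le \rho\le 2s$, $D^j_{\rho,i}$ (for a fixed $k$) is the determinant of the matrix obtained from $N_k$ by replacing the $i$-th column of the block column $F^{(k)}_\rho$ by the $j$-th column of $F^{(k)}_{2s+1}$. The scaling, for $\mu>0$: $a^{2r+1}\mapsto\mu^{-1+r/s}a^{2r+1}$ ($r=0,\dots,s-1$), $a^{2r}\mapsto\mu^{r/s}a^{2r}$ ($r=0,\dots,s$); homogeneous of degree $d$ means multiplied by $\mu^d$. *)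

(* Defs.v *)
From HB Require Import structures.
From mathcomp Require Import all_boot all_order all_algebra.
Set Implicit Arguments. Unset Strict Implicit. Unset Printing Implicit Defensive.
Import Order.TTheory GRing.Theory Num.Theory.
Local Open Scope ring_scope.

Section OddSetting.
Variables (R : comRingType) (n s : nat).

Definition msz : nat := (2 * s).+1.

(* a k r = a_k^r  (superscript r in 0..2s; other r unused) *)
Variable a : nat -> nat -> 'M[R]_n.

(* block decomposition of a big index p : 'I_(m*n) as (block, inner),
   lexicographic: p = block * n + inner *)
Definition blk (p : 'I_(msz * n)) : 'I_msz * 'I_n :=
  enum_val (cast_ord (esym (mxvec_cast msz n)) p).

(* Q_k : I_n in blocks (i+1,i), last block column (a_k^0; ...; a_k^{2s}) *)
Definition Qmx (k : nat) : 'M[R]_(msz * n) :=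
  \matrix_(p, q)
    let: (bi, ii) := blk p in let: (bj, jj) := blk q in
    if nat_of_ord bj == (2 * s)%N then a k bi ii jj
    else if nat_of_ord bi == (nat_of_ord bj).+1 then (ii == jj)%:R else 0.

Definition rmx (k : nat) : 'M[R]_(msz * n, n) :=
  \matrix_(p, j) let: (bi, ii) := blk p in
    if odd bi then 0 else a k bi ii j.

Fixpoint Qprod (k l : nat) : 'M[R]_(msz * n) :=
  match l with
  | 0 => 1%:M
  | l'.+1 => Qprod k l' *m Qmx (k + l')
  end.

Definition Fmx (k l : nat) : 'M[R]_(msz * n, n) := Qprod k l *m rmx (k + l).

Definition Nmx (k : nat) : 'M[R]_(msz * n) :=
  \matrix_(p, q) let: (bj, jj) := blk q in Fmx k bj p jj.

(* D^j_{rho,i}: determinant of N_k with column i of block column F_rho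
   replaced by column j of F_{2s+1} *)
Definition Ddet (k rho : nat) (i j : 'I_n) : R :=
  \det (\matrix_(p, q)
          if (nat_of_ord (blk q).1 == rho) && ((blk q).2 == i)
          then Fmx k (2 * s).+1 p j else Nmx k p q).

End OddSetting.

(* The scaling with parameter mu = t^s (t = mu^{1/s} > 0):
   a^{2r+1} |-> mu^{-1+r/s} a^{2r+1} = mu^{-1} t^r a^{2r+1},
   a^{2r}   |-> mu^{r/s} a^{2r}      = t^r a^{2r}. *)
Definition scale_coef (R : unitRingType) (mu t : R) (r : nat) : R :=
  if odd r then mu^-1 * t ^+ r./2 else t ^+ r./2.

Definition scaled (R : unitRingType) (n : nat) (mu t : R)
    (a : nat -> nat -> 'M[R]_n) : nat -> nat -> 'M[R]_n :=
  fun k r => scale_coef mu t r *: a k r.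

(* Main.v *)
Require Import Defs.
From HB Require Import structures.
From mathcomp Require Import all_boot all_order all_algebra.
From Stdlib Require Import FunctionalExtensionality.
From mathcomp Require Import ring zify.
Import Order.TTheory GRing.Theory Num.Theory.
Local Open Scope ring_scope.

Set Implicit Arguments. Unset Strict Implicit. Unset Printing Implicit Defensive.

Lemma index_allpairs (T1 T2 : eqType) (s1 : seq T1) (s2 : seq T2) x y :
  x \in s1 -> y \in s2 ->
  index (x, y) [seq (x1, x2) | x1 <- s1, x2 <- s2] = (index x s1 * size s2 + index y s2)%N.
Proof.
elim: s1 => //= z s1 IH xs ys2; rewrite index_cat.
have [<-|nzx] := eqVneq z x.
  rewrite (index_map (f := pair z)); last by move=> a b [].
  by rewrite mem_map ?ys2 // ?eqxx ?mul0n ?add0n //; move=> a b [].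
have -> : ((x, y) \in [seq (z, x2) | x2 <- s2]) = false.
  by apply/negbTE/mapP=> [[w _ [/esym /eqP]]]; rewrite (negbTE nzx).
move: xs; rewrite inE eq_sym (negbTE nzx) /= => xs.
by rewrite size_map IH // mulSn addnA.
Qed.

Lemma idx_val m n (i : 'I_m) (j : 'I_n) : nat_of_ord (mxvec_index i j) = (i * n + j)%N.
Proof.
rewrite /mxvec_index /= /enum_rank enum_rank_in.unlock /= insubdK; last first.
  by rewrite unfold_in /= cardE index_mem mem_enum.
rewrite enumT unlock /= /prod_enum index_allpairs ?mem_enum //.
by rewrite !index_enum_ord size_enum_ord.
Qed.

Section Blocks.
Variables (n s : nat).
Local Notation M := (msz s * n)%N.
Local Notation idx := (@mxvec_index (msz s) n).

Lemma blk_idx b i : blk (idx b i) = (b, i).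
Proof. by rewrite /blk /mxvec_index cast_ordK enum_rankK. Qed.

Lemma idx_blk (p : 'I_M) : idx (blk p).1 (blk p).2 = p.
Proof. by case/mxvec_indexP: p => b i; rewrite blk_idx. Qed.

Lemma sum_blk (V : nmodType) (f : 'I_M -> V) :
  \sum_(q < M) f q = \sum_(x < msz s) \sum_(i < n) f (idx x i).
Proof.
rewrite pair_big /= (reindex (fun u => idx u.1 u.2)) //.
exists (fun q => blk q) => [[x i] _|q _] /=; first by rewrite blk_idx.
exact: idx_blk.
Qed.

Lemma blk_lt (p q : 'I_M) : ((blk p).1 < (blk q).1)%N -> (p < q)%N.
Proof.
rewrite -[p]idx_blk -[q]idx_blk !blk_idx !idx_val /=.
case: (blk p) (blk q) => [bp ip] [bq iq] /= H.
apply: (@leq_trans (bp.+1 * n)); first by rewrite mulSn addnC ltn_add2r.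
by apply: leq_trans (leq_addr _ _); rewrite leq_mul2r H orbT.
Qed.

End Blocks.

Lemma cramer_col (R : comRingType) N (A : 'M[R]_N) (q0 : 'I_N) (v : 'cV[R]_N) :
  \det (\matrix_(p, q) if q == q0 then v p 0 else A p q) = (\adj A *m v) q0 0.
Proof.
rewrite (expand_det_col _ q0) mxE; apply: eq_bigr => p _.
rewrite mxE eqxx mulrC mxE; congr (_ * _).
rewrite /cofactor; congr (_ * \det _).
by apply/matrixP=> x y; rewrite !mxE eq_sym (negbTE (neq_lift q0 y)).
Qed.

Section Gen.
Variables (R : comRingType) (n s : nat).
Local Notation M := (msz s * n)%N.
Local Notation idx := (@mxvec_index (msz s) n).

Definition Nof (F : nat -> 'M[R]_(M, n)) : 'M[R]_M :=
  \matrix_(p, q) F (blk q).1 p (blk q).2.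
Definition blockcol (C : 'I_(msz s) -> 'M[R]_n) : 'M[R]_(M, n) :=
  \matrix_(p, j) C (blk p).1 (blk p).2 j.
Definition unblk (X : 'M[R]_(M, n)) (x : 'I_(msz s)) : 'M[R]_n :=
  \matrix_(i, j) X (idx x i) j.
Definition Repl (F : nat -> 'M[R]_(M, n)) rho i j : 'M[R]_M :=
  \matrix_(p, q)
    if (nat_of_ord (blk q).1 == rho) && ((blk q).2 == i)
    then F (2 * s).+1 p j else Nof F p q.

Lemma blockcolK X : blockcol (unblk X) = X.
Proof. by apply/matrixP=> p j; rewrite !mxE idx_blk. Qed.

Lemma unblkK C : unblk (blockcol C) = C.
Proof.
apply: functional_extensionality => x; apply/matrixP=> i j; by rewrite !mxE blk_idx.
Qed.

Lemma Nof_mul F C : Nof F *m blockcol C = \sum_(x < msz s) F x *m C x.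
Proof.
apply/matrixP=> p j; rewrite !mxE summxE sum_blk; apply: eq_bigr => x _.
by rewrite mxE; apply: eq_bigr => i _; rewrite !mxE blk_idx.
Qed.

Lemma Repl_cramer F (rho : 'I_(msz s)) i j :
  \det (Repl F rho i j) = (\adj (Nof F) *m F (msz s)) (idx rho i) j.
Proof.
have -> : Repl F rho i j = \matrix_(p, q) if q == idx rho i then
             (col j (F (msz s))) p 0 else Nof F p q.
  apply/matrixP=> p q; rewrite !mxE; congr (if _ then _ else _).
  rewrite -[q]idx_blk; case: (blk q) => b c /=.
  rewrite blk_idx /=; apply/idP/eqP => [/andP[/eqP/val_inj-> /eqP->] //|].
  by move/(congr1 (@blk n s)); rewrite !blk_idx => -[-> ->]; rewrite !eqxx.
rewrite cramer_col !mxE; apply: eq_bigr => p _; by rewrite !mxE.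
Qed.

End Gen.

Section Sys.
Variables (R : comRingType) (n s : nat) (a : nat -> nat -> 'M[R]_n).
Local Notation M := (msz s * n)%N.
Local Notation idx := (@mxvec_index (msz s) n).
Local Notation Q := (Qmx s a).
Local Notation r := (rmx s a).

Definition piM : 'M[R]_(n, M) := \matrix_(i, p) ((@blk n s p) == (ord_max, i))%:R.

Lemma rpiE k (p q : 'I_M) :
  (r k *m piM) p q = if nat_of_ord (blk q).1 == (2 * s)%N then r k p (blk q).2 else 0.
Proof.
rewrite mxE -[q]idx_blk blk_idx; case: (blk q) => b c /=.
case: eqP => [Hb|Hb].
  have Eb : b = ord_max by apply: val_inj.
  rewrite (bigD1 c) //= big1 => [|i /negbTE Hi].
    by rewrite !mxE blk_idx Eb eqxx mulr1 addr0.
  by rewrite !mxE blk_idx xpair_eqE (eq_sym c) Hi andbF mulr0.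
apply: big1 => i _; rewrite !mxE blk_idx xpair_eqE.
have -> : (b == ord_max) = false by apply/eqP=> Hb'; apply: Hb; rewrite Hb'.
by rewrite /= mulr0.
Qed.

Lemma Qprod_first k j : Qprod s a k j.+1 = Q k *m Qprod s a k.+1 j.
Proof.
elim: j => [|j IH]; first by rewrite /= mul1mx addn0 mulmx1.
rewrite [LHS]/Qprod -/(Qprod s a k j.+1) IH [in RHS]/Qprod -/(Qprod s a k.+1 j).
by rewrite mulmxA addnS addSn.
Qed.

Lemma Fmx_first k j : Fmx s a k j.+1 = Q k *m Fmx s a k.+1 j.
Proof. by rewrite /Fmx Qprod_first mulmxA addnS addSn. Qed.

Lemma Fmx0 k : Fmx s a k 0 = r k.
Proof. by rewrite /Fmx /= mul1mx addn0. Qed.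

Lemma sgnE (b : nat) : (-1) ^+ b = (if odd b then -1 else 1) :> R.
Proof. by rewrite -signr_odd; case: odd. Qed.

Definition Jm : 'M[R]_M := diag_mx (\row_p ((-1) ^+ (@blk n s p).1)).

Lemma J1 : Jm *m Jm = 1%:M.
Proof.
apply/matrixP=> p q; rewrite mul_diag_mx !mxE.
case: eqP => [->|_]; last by rewrite mulr0n mulr0.
by rewrite !mulr1n sgnE; case: odd; rewrite ?mulrNN mulr1.
Qed.

Lemma J3 k : Jm *m r k = r k.
Proof.
apply/matrixP=> p j; rewrite mul_diag_mx !mxE -[p]idx_blk blk_idx sgnE.
by case: (blk p) => b i /=; case: (odd b); rewrite ?mulr0 ?mul1r.
Qed.

Lemma J4 : piM *m Jm = piM.
Proof.
apply/matrixP=> i p; rewrite mul_mx_diag !mxE -[p]idx_blk blk_idx sgnE.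
case: (blk p) => b c /=; case: eqP => [[-> _]|_]; last by rewrite mul0r.
by rewrite /= oddM mulr1.
Qed.

Lemma J2 k : Jm *m Q k *m Jm = - Q k + 2%:R *: (r k *m piM).
Proof.
apply/matrixP=> p q; rewrite mul_mx_diag mul_diag_mx; set P := (r k *m piM).
rewrite !mxE; have := rpiE k p q; rewrite mxE => ->.
rewrite -[p]idx_blk -[q]idx_blk !blk_idx.
case: (blk p) => bp ip; case: (blk q) => bq iq /=.
rewrite mxE blk_idx !sgnE /=.
case: eqP => [->|_].
  by rewrite oddM /=; case: (odd bp); ring.
case: eqP => [->|_]; last by ring.
rewrite /=; case: (odd bq); case: (ip == iq); rewrite /= ?mulr0n ?mulr1n; ring.
Qed.

Variable k : nat.
Variable beta : nat -> R.

Definition Qb x := Q (k + x) + beta x *: (r (k + x) *m piM).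
Fixpoint Pb L := match L with 0 => 1%:M | L'.+1 => Pb L' *m Qb L' end.
Definition Fb L := Pb L *m r (k + L).

Lemma Qprod_pert L :
  Qprod s a k L = Pb L - \sum_(0 <= x < L)
     Pb x *m (beta x *: (r (k + x) *m piM)) *m Qprod s a (k + x).+1 (L - x.+1).
Proof.
elim: L => [|L IH]; first by rewrite big_geq // subr0.
rewrite /= IH big_nat_recr //= subnn /= mulmx1 mulmxBl mulmx_suml.
have -> : Q (k + L) = Qb L - beta L *: (r (k + L) *m piM) by rewrite /Qb addrK.
rewrite mulmxBr -addrA -opprD; congr (_ - _); rewrite addrC; congr (_ + _).
apply: eq_big_nat => x /andP[_ HxL].
rewrite /Qb addrK -[LHS]mulmxA; congr (_ *m _).
rewrite (_ : (L.+1 - x.+1)%N = (L - x.+1).+1); last by rewrite subSS subnSK.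
rewrite [RHS]/Qprod -/(Qprod s a (k + x).+1 (L - x.+1)); congr (_ *m Q _).
by rewrite addSn -addnS subnSK // -addnA subnKC // ltnW.
Qed.


Lemma Fmx_pert L :
  Fmx s a k L = Fb L - \sum_(0 <= x < L)
     Fb x *m (beta x *: (piM *m Fmx s a (k + x).+1 (L - x.+1))).
Proof.
rewrite /Fmx Qprod_pert mulmxBl mulmx_suml; congr (_ - _).
apply: eq_big_nat => x /andP[_ HxL].
rewrite (_ : ((k + x).+1 + (L - x.+1))%N = (k + L)%N); last first.
  by rewrite addSn -addnS subnSK // -addnA subnKC // ltnW.
rewrite /Fb -?scalemxAr -?scalemxAl -?scalemxAr -?scalemxAl -?scalemxAr !mulmxA.
by [].
Qed.

End Sys.

Section Main.
Variables (R : idomainType) (n s : nat) (a : nat -> nat -> 'M[R]_n) (k : nat).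
Local Notation M := (msz s * n)%N.
Local Notation m := (msz s).
Local Notation idx := (@mxvec_index (msz s) n).
Local Notation Q := (Qmx s a).
Local Notation r := (rmx s a).
Local Notation F := (Fmx s a).
Local Notation N := (Nmx s a k).
Local Notation d := (\det (Nmx s a k)).

Definition Ufor (C : 'I_m -> 'M[R]_n) (y : nat) : 'M[R]_(M, n) :=
  d *: F (k + y) (m - y) - \sum_(x < m | (y <= x)%N) F (k + y) (x - y) *m C x.

Lemma Ufor_end C : Ufor C m = d *: r (k + m).
Proof.
rewrite /Ufor subnn Fmx0 big_pred0 ?subr0 // => x.
by apply/negbTE; rewrite -ltnNge ltn_ord.
Qed.

Lemma Ufor_rec C (y : 'I_m) :
  Ufor C y = Q (k + y) *m Ufor C y.+1 - r (k + y) *m C y.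
Proof.
have Hs : \sum_(x < m | (y <= x)%N && (x != y)) F (k + y) (x - y) *m C x =
   Q (k + y) *m \sum_(x < m | (y.+1 <= x)%N) F (k + y.+1) (x - y.+1) *m C x.
  rewrite mulmx_sumr; apply: eq_big => x; first by rewrite ltn_neqAle eq_sym andbC.
  move=> /andP[H1 H2]; have Hlt : (y < x)%N by rewrite ltn_neqAle eq_sym H2 H1.
  by rewrite -(subnSK Hlt) Fmx_first mulmxA addnS.
rewrite /Ufor mulmxBr -scalemxAr.
have -> : (m - y = (m - y.+1).+1)%N by rewrite subnSK.
rewrite Fmx_first -addnS (bigD1 y) //= subnn Fmx0 Hs.
by rewrite opprD addrA [LHS]addrAC.
Qed.

Lemma Ufor_uniq (Z : nat -> 'M[R]_(M, n)) C :
  Z m = d *: r (k + m) ->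
  (forall y : 'I_m, Z y = Q (k + y) *m Z y.+1 - r (k + y) *m C y) ->
  forall y, (y <= m)%N -> Z y = Ufor C y.
Proof.
move=> Hend Hrec y Hy; have [z Ez] : exists z, z = (m - y)%N by exists (m - y)%N.
elim: z y Hy Ez => [|z IH] y Hy Ez.
  have -> : y = m by apply/eqP; rewrite eqn_leq Hy -subn_eq0 -Ez.
  by rewrite Hend Ufor_end.
have Hym : (y < m)%N by rewrite -subn_gt0 -Ez.
rewrite (Hrec (Ordinal Hym)) (Ufor_rec C (Ordinal Hym)) /= IH //.
by rewrite subnS -Ez.
Qed.

Lemma NmxE : N = Nof (F k).
Proof. by apply/matrixP=> p q; rewrite [LHS]mxE [RHS]mxE; case: (blk q). Qed.

Lemma Ufor0 C : Ufor C 0 = d *: F k m - N *m blockcol C.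
Proof.
rewrite /Ufor addn0 subn0 NmxE Nof_mul; congr (_ - _).
by apply: eq_big => x // _; rewrite subn0.
Qed.


Hypothesis hd : d != 0.
Hypothesis h2 : (2%:R : R) != 0.

Definition Xm := \adj N *m F k m.
Definition Xb := unblk Xm.

Lemma NX : N *m Xm = d *: F k m.
Proof. by rewrite /Xm mulmxA mul_mx_adj mul_scalar_mx. Qed.

Lemma cancelN (Y : 'M[R]_(M, n)) : N *m Y = 0 -> Y = 0.
Proof.
move=> H; have : \adj N *m (N *m Y) = 0 by rewrite H mulmx0.
rewrite mulmxA mul_adj_mx mul_scalar_mx => /eqP.
by rewrite scalemx_eq0 (negbTE hd) /= => /eqP.
Qed.

Lemma U0 : Ufor Xb 0 = 0.
Proof. by rewrite Ufor0 /Xb blockcolK NX subrr. Qed.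

Definition Zs y := - ((-1) ^+ y *: (Jm R n s *m Ufor Xb y)) : 'M[R]_(M, n).
Definition Cs (y : 'I_m) :=
  (-1) ^+ y.+1 *: (Xb y - 2%:R *: (piM R n s *m Ufor Xb y.+1)).

Lemma Zs_end : Zs m = d *: r (k + m).
Proof.
rewrite /Zs Ufor_end sgnE /= oddM /= scaleN1r opprK -scalemxAr.
by rewrite J3.
Qed.

Lemma Zs_rec (y : 'I_m) : Zs y = Q (k + y) *m Zs y.+1 - r (k + y) *m Cs y.
Proof.
rewrite /Zs /Cs Ufor_rec.
set U1 := Ufor Xb y.+1; set V := Jm R n s *m U1.
have HJ : Jm R n s *m (Q (k + y) *m U1 - r (k + y) *m Xb y) =
   (- Q (k + y) + 2%:R *: (r (k + y) *m piM R n s)) *m V - r (k + y) *m Xb y.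
  rewrite mulmxBr [X in _ - X]mulmxA J3 -J2 /V; congr (_ - _).
  by rewrite !mulmxA -(mulmxA _ (Jm R n s) (Jm R n s)) J1 mulmx1.
have HpV : piM R n s *m U1 = piM R n s *m V by rewrite /V mulmxA J4.
rewrite HJ HpV exprS.
do 3! rewrite ?mulmxDl ?mulmxDr ?mulmxBr ?mulmxBl ?mulmxN ?mulNmx -?scalemxAl -?scalemxAr -?mulmxA.
move: (Q (k + y) *m V) (r (k + y) *m (piM R n s *m V)) (r (k + y) *m Xb y) => A B C.
by apply/matrixP=> p j; rewrite !mxE; ring.
Qed.

Lemma Zs0 : Zs 0 = 0.
Proof. by rewrite /Zs U0 mulmx0 scaler0 oppr0. Qed.

Lemma Cs_eq y : Cs y = Xb y.
Proof.
have HZ := Ufor_uniq Zs_end Zs_rec (leq0n m).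
rewrite Zs0 Ufor0 in HZ.
have H : N *m (blockcol Cs - Xm) = 0.
  move/eqP: HZ; rewrite eq_sym subr_eq0 => /eqP HZ.
  by rewrite mulmxBr NX HZ subrr.
have := cancelN H; move/eqP; rewrite subr_eq0 => /eqP HC.
by rewrite -[Cs]unblkK HC.
Qed.

Lemma KEY (y : 'I_m) : piM R n s *m Ufor Xb y.+1 = (~~ odd y)%:R *: Xb y.
Proof.
have H := Cs_eq y; rewrite /Cs in H.
move: (Xb y) (piM R n s *m Ufor Xb y.+1) H => X P H.
apply/matrixP=> i j; move/matrixP: H => /(_ i j); rewrite !mxE sgnE /=.
move: (X i j) (P i j) => x p.
case: (odd y) => /= H.
  have E : 2%:R * (p - 0%:R * x) = x - 1 * (x - 2%:R * p) by ring.
  by move: E; rewrite H subrr => /eqP; rewrite mulf_eq0 (negbTE h2) /= subr_eq0 => /eqP.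
have E : 2%:R * (p - 1%:R * x) = (-1) * (x - 2%:R * p) - x by ring.
by move: E; rewrite H subrr => /eqP; rewrite mulf_eq0 (negbTE h2) /= subr_eq0 => /eqP.
Qed.

Variable beta : nat -> R.
Local Notation Fb := (Fb s a k beta).
Local Notation pi := (piM R n s).

Definition G x L := beta x *: (pi *m F (k + x).+1 (L - x.+1)).

Lemma sum_conv (V : nmodType) L (f : nat -> V) : (L <= m)%N ->
  \sum_(0 <= x < L) f x = \sum_(x < m | (x < L)%N) f x.
Proof. by move=> HL; rewrite big_mkord (big_ord_widen m f HL). Qed.

Lemma Fpert L : (L <= m)%N ->
  F k L = Fb L - \sum_(x < m | (x < L)%N) Fb x *m G x L.
Proof. by move=> HL; rewrite (Fmx_pert _ _ _ beta) (sum_conv _ HL). Qed.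

Lemma E1 : \sum_(y < m) Fb y *m (beta y *: (pi *m Ufor Xb y.+1)) =
  d *: (Fb m - F k m) - \sum_(y < m) \sum_(x < m | (y < x)%N) Fb y *m G y x *m Xb x.
Proof.
have -> : Fb m - F k m = \sum_(y < m) Fb y *m G y m.
  by rewrite (Fpert (leqnn m)) opprB addrC subrK; apply: eq_bigl => x; rewrite ltn_ord.
rewrite scaler_sumr -sumrB; apply: eq_bigr => y _.
rewrite /Ufor /G addnS mulmxBr scalerBr mulmxBr; congr (_ - _).
  by rewrite -!scalemxAr scalerA mulrC -scalerA.
rewrite mulmx_sumr scaler_sumr mulmx_sumr; apply: eq_bigr => x _.
by rewrite -!scalemxAr -!scalemxAl !mulmxA.
Qed.

Lemma E2 : d *: F k m = \sum_(x < m) Fb x *m Xb x -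
   \sum_(x < m) \sum_(y < m | (y < x)%N) Fb y *m G y x *m Xb x.
Proof.
rewrite -NX NmxE -{1}[Xm]blockcolK Nof_mul -sumrB; apply: eq_bigr => x _.
by rewrite (Fpert (ltnW (ltn_ord x))) mulmxBl mulmx_suml.
Qed.

Lemma E3 : \sum_(y < m) \sum_(x < m | (y < x)%N) Fb y *m G y x *m Xb x =
   \sum_(x < m) \sum_(y < m | (y < x)%N) Fb y *m G y x *m Xb x.
Proof. by rewrite (exchange_big_dep xpredT). Qed.

Definition SX (y : 'I_m) := Xb y + beta y *: (pi *m Ufor Xb y.+1).

Lemma beta1 : Nof Fb *m blockcol SX = d *: Fb m.
Proof.
rewrite Nof_mul /SX.
under eq_bigr do rewrite mulmxDr.
rewrite big_split /= E1 scalerBr E2 E3.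
move: (\sum_(i < m) _) (\sum_(x < m) \sum_(y < m | _) _) (d *: Fb m) => A B C.
by apply/matrixP=> p j; rewrite !mxE; ring.
Qed.

Definition Ubar : 'M[R]_M := \matrix_(p, q)
  (if ((blk p).1 < (blk q).1)%N then G (blk p).1 (blk q).1 (blk p).2 (blk q).2 else 0).

Lemma NmxU : N = Nof Fb *m (1%:M - Ubar).
Proof.
rewrite mulmxBr mulmx1 NmxE; apply/matrixP=> p q.
rewrite [LHS]mxE (Fpert (ltnW (ltn_ord (blk q).1))).
rewrite [RHS]mxE [in RHS]mxE [LHS]mxE [in LHS]mxE; congr (_ + _).
  by rewrite /Fb [RHS]mxE.
rewrite [LHS]mxE [RHS]mxE; congr (- _).
rewrite summxE [RHS]mxE sum_blk big_mkcond /=; apply: eq_bigr => x _.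
case: ifP => Hx.
  by rewrite mxE; apply: eq_bigr => i _; rewrite !mxE !blk_idx /= Hx.
by rewrite big1 // => i _; rewrite [Ubar _ _]mxE blk_idx /= Hx mulr0.
Qed.


Lemma detU : \det (1%:M - Ubar) = 1.
Proof.
rewrite -det_tr det_trig.
  rewrite big1 // => p _; rewrite !mxE eqxx ltnn subr0 //.
apply/is_trig_mxP=> p q Hpq; rewrite !mxE.
have -> : (q == p) = false by apply/negbTE; rewrite neq_ltn Hpq orbT.
case: ifP => H; last by rewrite subr0.
by have := blk_lt H; rewrite ltnNge ltnW.
Qed.

Lemma detNb : \det (Nof Fb) = d.
Proof. by rewrite NmxU det_mulmx detU mulr1. Qed.

Lemma mainB (rho : 'I_m) i j :
  \det (Repl Fb rho i j) = (1 + beta rho * (~~ odd rho)%:R) * \det (Repl (F k) rho i j).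
Proof.
rewrite !Repl_cramer -NmxE -/Xm.
have HX : \adj (Nof Fb) *m Fb m = blockcol SX.
  apply/eqP; rewrite -subr_eq0; apply/eqP.
  have H : Nof Fb *m (\adj (Nof Fb) *m Fb m - blockcol SX) = 0.
    by rewrite mulmxBr beta1 mulmxA mul_mx_adj detNb mul_scalar_mx subrr.
  have : \adj (Nof Fb) *m (Nof Fb *m (\adj (Nof Fb) *m Fb m - blockcol SX)) = 0.
    by rewrite H mulmx0.
  rewrite mulmxA mul_adj_mx detNb mul_scalar_mx => /eqP.
  by rewrite scalemx_eq0 (negbTE hd) /= => /eqP.
rewrite HX mxE blk_idx /SX /= KEY.
rewrite (_ : Xm (idx rho i) j = Xb rho i j); last by rewrite /Xb /unblk mxE.
move: (Xb rho) => X; rewrite !mxE; ring.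
Qed.

End Main.

Section Morph.
Variables (R S : comRingType) (f : {rmorphism R -> S}) (n s : nat).
Variables (a : nat -> nat -> 'M[R]_n) (k : nat) (beta : nat -> R).
Local Notation M := (msz s * n)%N.
Let am := fun k r => map_mx f (a k r).
Let bm := fun x => f (beta x).

Lemma map_Qmx x : map_mx f (Qmx s a x) = Qmx s am x.
Proof.
apply/matrixP=> p q; rewrite !mxE; case: (blk p) => bp ip; case: (blk q) => bq iq.
case: ifP => _; first by rewrite mxE.
by case: ifP => _; rewrite ?rmorph_nat ?rmorph0.
Qed.

Lemma map_rmx x : map_mx f (rmx s a x) = rmx s am x.
Proof.
apply/matrixP=> p q; rewrite !mxE; case: (blk p) => bp ip.
by case: ifP => _; rewrite ?rmorph0 ?mxE.
Qed.

Lemma map_piM : map_mx f (piM R n s) = piM S n s.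
Proof. by apply/matrixP=> p q; rewrite !mxE rmorph_nat. Qed.

Lemma map_Pb L : map_mx f (Pb s a k beta L) = Pb s am k bm L.
Proof.
elim: L => [|L IH] /=; first by rewrite map_scalar_mx rmorph1.
by rewrite map_mxM IH /Qb map_mxD map_mxZ map_mxM map_Qmx map_rmx map_piM.
Qed.

Lemma map_Fb L : map_mx f (Fb s a k beta L) = Fb s am k bm L.
Proof. by rewrite /Fb map_mxM map_Pb map_rmx. Qed.

Lemma map_Repl (F : nat -> 'M[R]_(M, n)) (Fm : nat -> 'M[S]_(M, n)) rho i j :
  (forall L, map_mx f (F L) = Fm L) ->
  map_mx f (Repl F rho i j) = Repl Fm rho i j.
Proof.
move=> HF; apply/matrixP=> p q; rewrite !mxE -!HF.
by case: ifP => _; rewrite mxE.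
Qed.

Lemma map_DetRepl rho i j :
  f (\det (Repl (Fb s a k beta) rho i j)) = \det (Repl (Fb s am k bm) rho i j).
Proof. by rewrite -det_map_mx (map_Repl _ _ _ map_Fb). Qed.

End Morph.

Lemma Fmx_Fb0 (R : comRingType) n s (a : nat -> nat -> 'M[R]_n) k :
  Fmx s a k = Fb s a k (fun _ => 0).
Proof.
apply: functional_extensionality => L.
rewrite (Fmx_pert _ _ _ (fun _ => 0)) big1 ?subr0 // => x _.
by rewrite scale0r mulmx0.
Qed.

Section A0.
Variables (R : comRingType) (n s : nat).
Local Notation M := (msz s * n)%N.
Local Notation m := (msz s).
Local Notation idx := (@mxvec_index (msz s) n).

Definition a0 : nat -> nat -> 'M[R]_n := fun _ r => if r == 0%N then 1%:M else 0.

Definition iotab (b : nat) : 'M[R]_(M, n) :=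
  \matrix_(p, j) ((nat_of_ord (blk p).1 == b) && ((blk p).2 == j))%:R.

Lemma Q_iota x (b : nat) : (b < 2 * s)%N -> Qmx s a0 x *m iotab b = iotab b.+1.
Proof.
move=> Hb; have Hbm : (b < m)%N by rewrite /msz ltnS ltnW.
apply/matrixP=> p j; rewrite mxE sum_blk (bigD1 (Ordinal Hbm)) //=.
rewrite [X in _ + X]big1 ?addr0 => [|x0 Hx0]; last first.
  apply: big1 => i _; rewrite [iotab _ _ _]mxE blk_idx /=.
  have -> : (nat_of_ord x0 == b) = false.
    by apply/negbTE; apply: contra Hx0 => /eqP H; apply/eqP/val_inj.
  by rewrite mulr0.
rewrite (bigD1 j) //= [X in _ + X]big1 ?addr0 => [|i Hi]; last first.
  by rewrite [iotab _ _ _]mxE blk_idx /= eqxx (negbTE Hi) mulr0.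
rewrite [iotab _ _ _]mxE blk_idx /= !eqxx mulr1 mxE blk_idx -[p]idx_blk blk_idx mxE blk_idx.
case: (blk p) => bp ip /=; rewrite (ltn_eqF Hb).
by case: eqP => _; rewrite ?andbF ?andbT // eq_sym.
Qed.

Lemma Qprod_iota x L b : (b + L < m)%N -> Qprod s a0 x L *m iotab b = iotab (b + L).
Proof.
elim: L b => [|L IH] b H /=; first by rewrite mul1mx addn0.
rewrite -mulmxA Q_iota; last by rewrite /msz ltnS addnS in H; apply: leq_trans H; rewrite ltnS leq_addr.
by rewrite IH ?addSnnS.
Qed.

Lemma r_iota x : rmx s a0 x = iotab 0.
Proof.
apply/matrixP=> p j; rewrite !mxE; case: (blk p) => bp ip /=.
rewrite /a0; case: eqP => [->|_] /=; first by rewrite mxE.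
by case: odd; rewrite ?mxE ?andFb.
Qed.

Lemma N_a0 x : Nmx s a0 x = 1%:M.
Proof.
apply/matrixP=> p q; rewrite -[q]idx_blk -[p]idx_blk.
case: (blk p) => bp ip; case: (blk q) => bq iq.
rewrite [LHS]mxE blk_idx /Fmx r_iota Qprod_iota ?add0n ?ltn_ord //.
rewrite !mxE !blk_idx /=.
have -> : (idx bp ip == idx bq iq) = ((bp == bq) && (ip == iq)).
  apply/eqP/andP => [/(congr1 (@blk n s))|[/eqP-> /eqP->] //].
  by rewrite !blk_idx => -[-> ->].
by [].
Qed.

End A0.

Lemma map_Fmx (R S : comRingType) (f : {rmorphism R -> S}) n s
   (a : nat -> nat -> 'M[R]_n) k L :
  map_mx f (Fmx s a k L) = Fmx s (fun k r => map_mx f (a k r)) k L.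
Proof.
rewrite !Fmx_Fb0 map_Fb; congr Fb.
by apply: functional_extensionality => x; rewrite rmorph0.
Qed.

Lemma map_Nmx (R S : comRingType) (f : {rmorphism R -> S}) n s
   (a : nat -> nat -> 'M[R]_n) k :
  map_mx f (Nmx s a k) = Nmx s (fun k r => map_mx f (a k r)) k.
Proof.
apply/matrixP=> p q; rewrite !mxE; case: (blk q) => bq iq.
by rewrite -map_Fmx [RHS]mxE.
Qed.

Lemma map_DetReplF (R S : comRingType) (f : {rmorphism R -> S}) n s
   (a : nat -> nat -> 'M[R]_n) k rho i j :
  f (\det (Repl (Fmx s a k) rho i j)) =
  \det (Repl (Fmx s (fun k r => map_mx f (a k r)) k) rho i j).
Proof. by rewrite -det_map_mx (map_Repl _ _ _ (@map_Fmx _ _ f _ _ a k)). Qed.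

Lemma B_all (R : realFieldType) n s (a : nat -> nat -> 'M[R]_n) k (beta : nat -> R)
   (rho : 'I_(msz s)) i j :
  \det (Repl (Fb s a k beta) rho i j) =
  (1 + beta rho * (~~ odd rho)%:R) * \det (Repl (Fmx s a k) rho i j).
Proof.
pose ap := fun x r => map_mx polyC (a x r) + 'X *: map_mx polyC (a0 R n x r - a x r).
pose bp := fun x => (beta x)%:P.
have evE c : (fun x r => map_mx (horner_eval c) (ap x r)) =
             (fun x r => a x r + c *: (a0 R n x r - a x r)).
  apply: functional_extensionality => x; apply: functional_extensionality => y.
  by apply/matrixP=> p q; rewrite !mxE /= horner_evalE !hornerE.
have ev0 : (fun x r => map_mx (horner_eval 0) (ap x r)) = a.
  rewrite evE; apply: functional_extensionality => x; apply: functional_extensionality => y.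
  by rewrite scale0r addr0.
have ev1 : (fun x r => map_mx (horner_eval 1) (ap x r)) = a0 R n.
  rewrite evE; apply: functional_extensionality => x; apply: functional_extensionality => y.
  by rewrite scale1r addrC subrK.
have bev0 : (fun x => horner_eval 0 (bp x)) = beta.
  by apply: functional_extensionality => x; rewrite horner_evalE hornerC.
have hd : \det (Nmx s ap k) != 0.
  apply/negP => /eqP H.
  have := congr1 (horner_eval 1) H; rewrite -det_map_mx map_Nmx ev1 N_a0 det1.
  by rewrite rmorph0 => /eqP; rewrite oner_eq0.
have h2 : (2%:R : {poly R}) != 0 by rewrite -polyC_natr polyC_eq0 pnatr_eq0.
have HB := mainB hd h2 bp rho i j.
rewrite -{1}ev0 -{1}bev0 -ev0.
rewrite -(map_DetRepl (horner_eval 0)) -map_DetReplF HB.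
by rewrite rmorphM rmorphD rmorph1 rmorphM rmorph_nat /= horner_evalE hornerC.
Qed.

Lemma halfSE b : (b.+1)./2 = (odd b + b./2)%N.
Proof. by rewrite -uphalf_half. Qed.

Lemma bdec b : b = (odd b + (b./2).*2)%N.
Proof. by rewrite odd_double_half. Qed.

Section Gauge.
Variables (R : realFieldType) (n s : nat) (a : nat -> nat -> 'M[R]_n) (k : nat).
Variables (mu t : R).
Hypothesis ht : 0 < t.
Hypothesis hts : t ^+ s = mu.
Local Notation M := (msz s * n)%N.
Local Notation m := (msz s).
Local Notation idx := (@mxvec_index (msz s) n).
Local Notation a' := (scaled mu t a).

Definition ex (x b : nat) : nat := ((s - b./2) + (odd x && ~~ odd b))%N.
Definition Em (x : nat) : 'M[R]_M := diag_mx (\row_p (t ^+ ex x (blk p).1)).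
Definition bet (x : nat) : R := t ^+ (s + odd x) - 1.

Lemma t_neq0 : t != 0. Proof. by rewrite gt_eqF. Qed.
Lemma mu_neq0 : mu != 0. Proof. by rewrite -hts expf_neq0 // t_neq0. Qed.

Lemma Grmx x : Em x *m rmx s a' (k + x) = t ^+ (s + odd x) *: rmx s a (k + x).
Proof.
apply/matrixP=> p j; rewrite mul_diag_mx !mxE -[p]idx_blk blk_idx.
case: (blk p) => bp ip /=; case: ifP => Hb; first by rewrite !mulr0.
rewrite mxE /scale_coef Hb mulrA -exprD /ex Hb /= andbT; congr (t ^+ _ * _).
have := ltn_ord bp; rewrite /msz ltnS; rewrite [in X in (X <= _)%N -> _](bdec bp) Hb /=.
case: (odd x) => /=; lia.
Qed.


Lemma ex_shift x (b : nat) : (b < 2 * s)%N -> (~~ odd x + ex x b.+1 = ex x.+1 b)%N.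
Proof.
rewrite /ex halfSE /= [in X in (X < _)%N -> _](bdec b).
by case: (odd x); case: (odd b) => /=; lia.
Qed.

Lemma ex_top x : ex x.+1 (2 * s) = ~~ odd x.
Proof. by rewrite /ex mul2n doubleK subnn odd_double andbT. Qed.

Lemma Hc x (b : 'I_m) : t ^+ ex x b * scale_coef mu t b = if odd b then 1 else t ^+ (s + odd x).
Proof.
have hb : (b./2 <= s)%N.
  have := ltn_ord b; rewrite /msz ltnS [in X in (X <= _)%N -> _](bdec b); lia.
rewrite /scale_coef /ex; case: ifP => Hb /=; rewrite ?andbF ?andbT ?addn0.
  by rewrite mulrCA -exprD subnK // hts mulVf // mu_neq0.
by rewrite -exprD -addnA [(odd x + _)%N]addnC addnA subnK.
Qed.

Lemma Gstep x : t ^+ (~~ odd x) *: (Em x *m Qmx s a' (k + x)) = Qb s a k bet x *m Em x.+1.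
Proof.
apply/matrixP=> p q; rewrite mul_mx_diag mul_diag_mx !mxE.
have := rpiE a (k + x) p q; rewrite mxE => ->.
rewrite -[p]idx_blk -[q]idx_blk !blk_idx.
case: (blk p) => bp ip; case: (blk q) => bq iq /=; rewrite !mxE !blk_idx /=.
case: eqP => [Hq|Hq].
  have -> : ex x.+1 bq = ~~ odd x by rewrite Hq ex_top.
  idtac.
  transitivity (t ^+ (~~ odd x) * (t ^+ ex x bp * scale_coef mu t bp) * a (k + x) bp ip iq).
    by ring.
  by rewrite Hc /bet; case: (odd bp); ring.
case: eqP => [Hp|Hp]; last by rewrite !mulr0 addr0 mul0r.
have hbq : (bq < 2 * s)%N.
  by rewrite ltn_neqAle; apply/andP; split; [apply/eqP | have := ltn_ord bq; rewrite /msz ltnS].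
rewrite mulr0 addr0 mulrA -exprD -ex_shift // -Hp.
by ring.
Qed.


Lemma uphalfS L : uphalf L.+1 = (~~ odd L + uphalf L)%N.
Proof. by rewrite !uphalf_half halfSE /=; case: (odd L). Qed.

Lemma Gprod L : t ^+ (uphalf L) *: (Em 0 *m Qprod s a' k L) = Pb s a k bet L *m Em L.
Proof.
elim: L => [|L IH]; first by rewrite /= scale1r mulmx1 mul1mx.
rewrite [Qprod _ _ _ _]/= uphalfS exprD -scalerA mulmxA scalemxAl IH.
by rewrite -mulmxA scalemxAr Gstep /= mulmxA.
Qed.

Lemma GF L : (L./2 <= s)%N -> Em 0 *m Fmx s a' k L = t ^+ (s - L./2) *: Fb s a k bet L.
Proof.
move=> HL; apply: (scalerI (expf_neq0 (uphalf L) t_neq0)).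
rewrite /Fmx mulmxA scalemxAl Gprod -mulmxA Grmx -scalemxAr scalerA -!exprD.
congr (t ^+ _ *: _); rewrite uphalf_half; lia.
Qed.


Lemma GFe L (p : 'I_M) j : (L./2 <= s)%N ->
  t ^+ ex 0 (blk p).1 * Fmx s a' k L p j = t ^+ (s - L./2) * Fb s a k bet L p j.
Proof.
move=> HL; move/matrixP: (GF HL) => /(_ p j).
by rewrite mul_diag_mx !mxE.
Qed.

Lemma gauge_det (rho : 'I_m) i j :
  t ^+ (s - rho./2) * \det (Repl (Fmx s a' k) rho i j) = \det (Repl (Fb s a k bet) rho i j).
Proof.
pose c (q : 'I_M) := (nat_of_ord (blk q).1 == rho) && ((blk q).2 == i).
pose g := \row_q (if c q then 1 else t ^+ (s - (blk q).1./2)) : 'rV[R]_M.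
have HR : Em 0 *m Repl (Fmx s a' k) rho i j = Repl (Fb s a k bet) rho i j *m diag_mx g.
  apply/matrixP=> p q; rewrite mul_diag_mx mul_mx_diag [LHS]mxE [RHS]mxE.
  rewrite [(\row__ _) 0 p]mxE [g 0 q]mxE [Repl _ _ _ _ p q]mxE [Repl (Fb _ _ _ _) _ _ _ p q]mxE.
  rewrite -/(c q); case: ifP => Hc.
    have hm : ((2 * s).+1)./2 = s by rewrite halfSE mul2n odd_double doubleK.
    by rewrite GFe hm ?leqnn // subnn mulr1 expr0 mul1r.
  rewrite [Nof _ p q]mxE [Nof (Fb _ _ _ _) p q]mxE GFe 1?mulrC //.
  have := ltn_ord (blk q).1; rewrite /msz ltnS [in X in (X <= _)%N -> _](bdec (blk q).1); lia.
have := congr1 determinant HR; rewrite !det_mulmx !det_diag.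
set q0 := idx rho i.
have Hcq q : c q = (q == q0).
  rewrite /c /q0 -[q]idx_blk blk_idx; case: (blk q) => b b' /=.
  apply/andP/eqP => [[/eqP/val_inj-> /eqP->] //|/(congr1 (@blk n s))].
  by rewrite !blk_idx => -[-> ->].
rewrite (bigD1 q0) //= [X in _ = _ * X](bigD1 q0) //= !mxE /q0 blk_idx /=.
rewrite -/q0 [c q0]Hcq eqxx /ex /= addn0 mul1r.
set P1 := \prod_(q | _) _; set P2 := \prod_(q | _) _.
have -> : P1 = P2.
  apply: eq_bigr => q Hq; rewrite !mxE Hcq (negbTE Hq) /ex /= addn0 //.
have HP : P2 != 0 by apply/prodf_neq0 => q _; rewrite !mxE Hcq; case: ifP => _; rewrite ?oner_eq0 ?expf_neq0 // t_neq0.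
move=> E; apply: (mulIf HP); rewrite -E; ring.
Qed.

End Gauge.

Lemma Ddet_Repl (R : comRingType) n s (a : nat -> nat -> 'M[R]_n) k rho i j :
  Ddet s a k rho i j = \det (Repl (Fmx s a k) rho i j).
Proof.
rewrite /Ddet; congr (\det _); apply/matrixP=> p q; rewrite [LHS]mxE [RHS]mxE.
case: ifP => // _; rewrite [LHS]mxE [RHS]mxE; by case: (blk q).
Qed.

Unset Implicit Arguments. Set Strict Implicit. Set Printing Implicit Defensive.

Theorem mainTheorem9 (R : realFieldType) (n s N : nat)
    (hn : (1 <= n)%N) (hs : (1 <= s)%N) (hN : (1 <= N)%N)
    (a : nat -> nat -> 'M[R]_n)
    (hper : forall k r, a (k + N)%N r = a k r)
    (k : nat) (i j : 'I_n) (l : nat) (hl : (l < s)%N)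
    (mu t : R) (hmu : 0 < mu) (ht : 0 < t) (hts : t ^+ s = mu) :
  Ddet s (scaled mu t a) k (2 * l) i j = t ^+ l * Ddet s a k (2 * l) i j.
Proof.
have hr : (2 * l < msz s)%N by rewrite /msz ltnS; lia.
pose rho := Ordinal hr.
rewrite !Ddet_Repl.
have G := gauge_det a k ht hts rho i j.
have B := B_all a k (bet s t) rho i j.
have Hh : (rho./2 = l)%N by rewrite /= mul2n doubleK.
rewrite Hh in G; rewrite -G in B.
have Hnz : t ^+ (s - l) != 0 by rewrite expf_neq0 // gt_eqF.
apply: (mulfI Hnz); rewrite B /bet /= oddM /= addn0 mulr1 addrC subrK.
by rewrite mulrA -exprD subnK // ltnW.
Qed.
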